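(* Let $S\subseteq\mathcal{S}_d$ be nonempty, $[d]$ partitioned into groups $G_1,\dots,G_g$, $\bar\alpha,\bar\beta\in[0,1]^g$, $k\in[d]$, and assume an $(\bar\alpha,\bar\beta)$-$k$-fair ranking in $\mathcal S_d$ exists. Let $\tau$ be an $(\bar\alpha,\bar\beta)$-$k$-fair top-$k$ ranking minimizing $2\sum_{\pi\in S}\sum_{i\in D_\tau}(\pi(i)-\tau(i))\mathbb{1}[\tau(i)<\pi(i)]$, and let $\sigma\in\mathcal S_d$ be a ranking with $\sigma(a)=\tau(a)$ for all $a\in D_\tau$ that minimizes $2\sum_{\pi\in S}\sum_{i\in[d]}(\pi(i)-\sigma(i))\mathbb{1}[\sigma(i)<\pi(i)]$ among all such extensions. Let $\sigma^*$ be any $(\bar\alpha,\bar\beta)$-$k$-fair ranking in $\mathcal S_d$ minimizing $\mathrm{Obj}$, let $\mathrm{OPT}=\mathrm{Obj}(\sigma^* )$, and let $L^*=\{a\in[d]:\sigma^*(a)\le k\}$. Then $\mathrm{Obj}(\sigma)\le\overleftarrow{\mathrm{Obj}}(\sigma^*_{L^*})+\mathrm{OPT}$.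
   Context: $\mathcal{S}_d$ is the set of rankings of $[d]$, $\pi(a)$ the rank of $a$. A top-$k$ ranking is a bijection $\tau:D_\tau\to[k]$, $D_\tau\subseteq[d]$. A full or top-$k$ ranking is $(\bar\alpha,\bar\beta)$-$k$-fair if for every $i\in[g]$ the candidates at positions $1,\dots,k$ include at least $\lfloor\alpha_i k\rfloor$ and at most $\lceil\beta_i k\rceil$ members of $G_i$. For $\pi,\sigma\in\mathcal S_d$, $F(\pi,\sigma)=\sum_{i\in[d]}|\pi(i)-\sigma(i)|$ and $\mathrm{Obj}(\sigma)=\sum_{\pi\in S}F(\pi,\sigma)$. For $\sigma\in\mathcal S_d$ and $D\subseteq[d]$, $\overleftarrow{\mathrm{Obj}}(\sigma_D):=2\sum_{\pi\in S}\sum_{i\in D}(\pi(i)-\sigma(i))\mathbb{1}[\sigma(i)<\pi(i)]$. *)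

(* Defs.v *)
From mathcomp Require Import all_boot all_order all_algebra all_fingroup.
Set Implicit Arguments. Unset Strict Implicit. Unset Printing Implicit Defensive.
Import Order.TTheory GRing.Theory Num.Theory.

(* Candidates [d] are 'I_d (0-based); a ranking pi in S_d is a permutation
   {perm 'I_d}; the (1-based) rank of candidate a is rk pi a = pi(a)+1 in [d]. *)
Definition rk (d : nat) (pi : {perm 'I_d}) (a : 'I_d) : nat := (val (pi a)).+1.

(* The partition of [d] into groups G_1..G_g is given by grp : 'I_d -> 'I_g,
   G_i = [set a | grp a == i]. *)

(* A top-k ranking tau : D_tau -> [k] (bijection) is represented by its
   inverse, an injective map t : 'I_k -> 'I_d sending position p (0-based)
   to the candidate at rank p+1; D_tau = codom t and tau(t p) = p+1. *)
Definition topk_ranking (d k : nat) (t : {ffun 'I_k -> 'I_d}) : bool :=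
  injectiveb t.

Definition fair_counts (R : archiRealFieldType) (g k : nat)
    (alpha beta : 'I_g -> R) (cnt : 'I_g -> nat) : Prop :=
  forall i : 'I_g,
    (Num.floor (alpha i * k%:R) <= (cnt i)%:Z)%R /\
    ((cnt i)%:Z <= Num.ceil (beta i * k%:R))%R.

Definition fair_full (R : archiRealFieldType) (d g k : nat) (grp : 'I_d -> 'I_g)
    (alpha beta : 'I_g -> R) (sigma : {perm 'I_d}) : Prop :=
  fair_counts k alpha beta
    (fun i => #|[set a : 'I_d | (rk sigma a <= k) && (grp a == i)]|).

Definition fair_topk (R : archiRealFieldType) (d g k : nat) (grp : 'I_d -> 'I_g)
    (alpha beta : 'I_g -> R) (t : {ffun 'I_k -> 'I_d}) : Prop :=
  fair_counts k alpha beta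
    (fun i => #|[set p : 'I_k | grp (t p) == i]|).

Definition footrule (d : nat) (pi sigma : {perm 'I_d}) : nat :=
  \sum_(a : 'I_d) `|rk pi a - rk sigma a|.

Definition Obj (d : nat) (S : {set {perm 'I_d}}) (sigma : {perm 'I_d}) : nat :=
  \sum_(pi in S) footrule pi sigma.

(* backward objective of sigma restricted to D:
   2 sum_{pi in S} sum_{i in D} (pi(i) - sigma(i)) 1[sigma(i) < pi(i)]
   (the truncated nat difference is multiplied by the indicator, so this
   is literally the paper's expression) *)
Definition backObj (d : nat) (S : {set {perm 'I_d}}) (sigma : {perm 'I_d})
    (D : {set 'I_d}) : nat :=
  2 * \sum_(pi in S) \sum_(a in D)
        (rk pi a - rk sigma a) * (rk sigma a < rk pi a).

(* same for a top-k ranking t: sum over i in D_tau, i = t p, tau(i) = p+1 *)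
Definition backObj_topk (d k : nat) (S : {set {perm 'I_d}})
    (t : {ffun 'I_k -> 'I_d}) : nat :=
  2 * \sum_(pi in S) \sum_(p : 'I_k)
        (rk pi (t p) - p.+1) * (p.+1 < rk pi (t p)).

(* Main.v *)
Require Import Defs.
From mathcomp Require Import all_boot all_order all_algebra all_fingroup.
From mathcomp Require Import zify.
Import Order.TTheory GRing.Theory Num.Theory.

Lemma termE (x y : nat) : (x - y) * (y < x) = x - y.
Proof.
case: ltnP => h; first by rewrite muln1.
by rewrite muln0; apply/esym/eqP; rewrite subn_eq0.
Qed.

Lemma boE d (S : {set {perm 'I_d}}) s D :
  backObj S s D = 2 * \sum_(pi in S) \sum_(a in D) (rk pi a - rk s a).
Proof.
rewrite /backObj; congr (2 * _); apply: eq_bigr => pi _.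
by apply: eq_bigr => a _; rewrite termE.
Qed.

Lemma sum_rk d (s : {perm 'I_d}) : \sum_a rk s a = \sum_(a : 'I_d) (val a).+1.
Proof. by rewrite /rk; rewrite [RHS](reindex_inj (@perm_inj _ s)). Qed.

Lemma footE d (pi s : {perm 'I_d}) :
  footrule pi s = 2 * \sum_a (rk pi a - rk s a).
Proof.
have e1 a : `|rk pi a - rk s a| = (rk pi a - rk s a) + (rk s a - rk pi a).
  case: (leqP (rk pi a) (rk s a)) => h.
    by rewrite distnEr // (eqP h) add0n.
  have h' := ltnW h.
  by rewrite distnEl // (eqP h') addn0.
rewrite /footrule (eq_bigr _ (fun a _ => e1 a)) big_split /=.
suff -> : \sum_a (rk s a - rk pi a) = \sum_a (rk pi a - rk s a) by rewrite addnn mul2n.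
apply: (@addnI (\sum_a rk pi a)).
rewrite {2}sum_rk -(sum_rk _ s) -!big_split /=; apply: eq_bigr => a _.
by rewrite -!maxnE maxnC.
Qed.

Lemma objE d (S : {set {perm 'I_d}}) s : Obj S s = backObj S s setT.
Proof.
rewrite boE /Obj big_distrr /=; apply: eq_bigr => pi _; rewrite footE.
by congr (2 * _); apply: eq_bigl => a; rewrite in_setT.
Qed.

Lemma card_lt d m : m <= d -> #|[set x : 'I_d | x < m]| = m.
Proof.
move=> md.
have winj : injective (widen_ord md).
  by move=> x y /(congr1 val) /= /val_inj.
rewrite (_ : [set x : 'I_d | x < m] = widen_ord md @: [set: 'I_m]).
  by rewrite card_imset // cardsT card_ord.
apply/setP => x; rewrite inE; apply/idP/imsetP => [h|[y _ ->]]; last exact: ltn_ord y.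
by exists (Ordinal h); rewrite ?in_setT //; apply: val_inj.
Qed.

Lemma sum_sub I (r : seq I) (P : pred I) (F : I -> nat) :
  \sum_(i <- r | P i) F i <= \sum_(i <- r) F i.
Proof. by rewrite [X in _ <= X](bigID P) /= leq_addr. Qed.

Theorem lemma4p4 (R : archiRealFieldType) (d g k : nat)
    (S : {set {perm 'I_d}}) (grp : 'I_d -> 'I_g) (alpha beta : 'I_g -> R)
    (t : {ffun 'I_k -> 'I_d}) (sigma sigma_star : {perm 'I_d}) :
  S != set0 ->
  (forall i, (0 <= alpha i <= 1)%R /\ (0 <= beta i <= 1)%R) ->
  (1 <= k <= d)%N ->
  (exists rho : {perm 'I_d}, fair_full k grp alpha beta rho) ->
  (* tau: fair top-k ranking minimizing the top-k backward objective *)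
  topk_ranking t -> fair_topk grp alpha beta t ->
  (forall t' : {ffun 'I_k -> 'I_d}, topk_ranking t' ->
     fair_topk grp alpha beta t' -> (backObj_topk S t <= backObj_topk S t')%N) ->
  (* sigma extends tau and minimizes the backward objective among extensions *)
  (forall p : 'I_k, rk sigma (t p) = p.+1) ->
  (forall sigma' : {perm 'I_d}, (forall p : 'I_k, rk sigma' (t p) = p.+1) ->
     (backObj S sigma [set: 'I_d] <= backObj S sigma' [set: 'I_d])%N) ->
  (* sigma_star: fair ranking minimizing Obj *)
  fair_full k grp alpha beta sigma_star ->
  (forall sigma' : {perm 'I_d}, fair_full k grp alpha beta sigma' ->
     (Obj S sigma_star <= Obj S sigma')%N) ->
  (Obj S sigma <=
     backObj S sigma_star [set a | (rk sigma_star a <= k)%N] + Obj S sigma_star)%N.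
Proof.
move=> _ _ /andP[k1 kd] _ /injectiveP tinj _ Htau _ Hsig Hfs _.
set Dset := [set t p | p in [set: 'I_k]].
have cardD : #|Dset| = k by rewrite card_imset // cardsT card_ord.
have cardC : #|~: Dset| = d - k.
  by have := cardsC Dset; rewrite cardD card_ord; lia.
pose cnt a := #|[set b | (b \notin Dset) && (sigma_star b < sigma_star a)]|.
pose pos a := if [pick p | t p == a] is Some p then val p else k + cnt a.
have P1 p : pos (t p) = p.
  rewrite /pos; case: pickP => [q /eqP /tinj -> // | /(_ p)]; by rewrite eqxx.
have P2 a : a \notin Dset -> pos a = k + cnt a.
  move=> aD; rewrite /pos; case: pickP => [q /eqP eq|//].
  by move: aD; rewrite -eq imset_f ?in_setT.
have cntb a : a \notin Dset -> cnt a < d - k.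
  move=> aD; rewrite -cardC; apply: proper_card; apply/properP; split.
    by apply/subsetP => b; rewrite !inE => /andP[].
  by exists a; rewrite !inE ?aD // ltnn andbF.
have posb a : pos a < d.
  case: (boolP (a \in Dset)) => [/imsetP[p _ ->]|aD].
    by rewrite P1; apply: leq_trans kd.
  rewrite P2 //; have := cntb a aD; lia.
pose f a := insubd a (pos a) : 'I_d.
have fE a : val (f a) = pos a by rewrite val_insubd posb.
have cntlt a b : sigma_star a < sigma_star b -> a \notin Dset -> cnt a < cnt b.
  move=> ab aD; apply: proper_card; apply/properP; split.
    apply/subsetP => c; rewrite !inE => /andP[-> /= ca]; exact: ltn_trans ca ab.
  by exists a; rewrite !inE ?aD ?ab // ltnn andbF.
have finj : injective f.
  move=> a b /(congr1 val); rewrite !fE.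
  case: (boolP (a \in Dset)) => [/imsetP[p _ ->]|aD];
  case: (boolP (b \in Dset)) => [/imsetP[q _ ->]|bD].
  - by rewrite !P1 => /val_inj ->.
  - by rewrite P1 P2 // => e; have := ltn_ord p; lia.
  - by rewrite P1 P2 // => e; have := ltn_ord q; lia.
  rewrite !P2 // => /addnI e.
  case: (ltngtP (sigma_star a) (sigma_star b)) => h.
  - by have := cntlt _ _ h aD; lia.
  - by have := cntlt _ _ h bD; lia.
  - by apply: (@perm_inj _ sigma_star); apply: val_inj.
pose sigma' := perm finj.
have rk' a : rk sigma' a = (pos a).+1 by rewrite /rk permE fE.
have Hs' p : rk sigma' (t p) = p.+1 by rewrite rk' P1.
have lb a : a \notin Dset -> rk sigma_star a <= rk sigma' a.
  move=> aD; rewrite rk' P2 // /rk ltnS.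
  have cA : #|[set b | sigma_star b < sigma_star a]| = val (sigma_star a).
    rewrite -(card_imset _ (@perm_inj _ sigma_star)) -[RHS](@card_lt d) ?(ltnW (ltn_ord _)) //.
    apply: eq_card => x; rewrite [in RHS]inE; apply/imsetP/idP => [[b]|hx].
      by rewrite inE => hb ->.
    by exists ((sigma_star^-1)%g x); rewrite ?inE permKV.
  rewrite -{1}cA -cardD addnC.
  apply: (leq_trans _ (leq_card_setU _ _).1); apply: subset_leq_card.
  apply/subsetP => b; rewrite inE => hb.
  by rewrite in_setU inE hb andbT orNb.
pose tstar := [ffun p : 'I_k => (sigma_star^-1)%g (widen_ord kd p)].
have rkt p : rk sigma_star (tstar p) = p.+1 by rewrite /rk ffunE permKV.
have tsinj : injective tstar.
  by move=> p q; rewrite !ffunE => /perm_inj /(congr1 val) /= /val_inj.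
have tsE a (h : rk sigma_star a <= k) : tstar (Ordinal h) = a.
  by rewrite ffunE; apply: (@perm_inj _ sigma_star); rewrite permKV; apply: val_inj.
have Lst : [set a | rk sigma_star a <= k] = [set tstar p | p in [set: 'I_k]].
  apply/setP => a; rewrite inE; apply/idP/imsetP => [h|[p _ ->]].
    by exists (Ordinal h); rewrite ?in_setT ?tsE.
  by rewrite rkt; exact: ltn_ord.
have ts_top : topk_ranking tstar by apply/injectiveP.
have ts_fair : fair_topk grp alpha beta tstar.
  move: Hfs; rewrite /fair_topk /fair_full /fair_counts => H i.
  suff -> : #|[set p : 'I_k | grp (tstar p) == i]| =
            #|[set a | (rk sigma_star a <= k) && (grp a == i)]| by exact: H.
  rewrite -(card_imset _ tsinj); apply: eq_card => a; rewrite [in RHS]inE.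
  apply/imsetP/idP => [[p]|/andP[h hg]].
    by rewrite inE => hp ->; rewrite rkt ltn_ord.
  by exists (Ordinal h); rewrite ?inE tsE.
have := Htau _ ts_top ts_fair.
have := Hsig sigma' Hs'.
rewrite objE [backObj S sigma_star _]boE objE !boE /backObj_topk.
set A := \sum_(pi in S) \sum_(p : 'I_k) _.
set B := \sum_(pi in S) \sum_(p : 'I_k) _.
move=> h1 h2.
apply: (leq_trans h1).
have split1 : \sum_(pi in S) \sum_(a in [set: 'I_d]) (rk pi a - rk sigma' a) =
   A + \sum_(pi in S) \sum_(a | a \notin Dset) (rk pi a - rk sigma' a).
  rewrite /A -big_split /=; apply: eq_bigr => pi _.
  rewrite (bigID (mem Dset)) /=; congr (_ + _).
    rewrite (eq_bigl (mem Dset)); last by move=> a; rewrite in_setT.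
    rewrite big_imset /=; last by move=> x y _ _; apply: tinj.
    apply: eq_big => p; first by rewrite in_setT.
    by move=> _; rewrite Hs' termE.
  by apply: eq_bigl => a; rewrite in_setT.
rewrite split1 mulnDr leq_add //.
  apply: (leq_trans h2); rewrite Lst /B leq_eqVlt; apply/orP; left; apply/eqP.
  congr (2 * _); apply: eq_bigr => pi _.
  rewrite big_imset /=; last by move=> x y _ _; exact: tsinj.
  apply: eq_big => p; first by rewrite in_setT.
  by move=> _; rewrite rkt termE.
rewrite leq_mul2l; apply/orP; right; apply: leq_sum => pi _.
rewrite [X in _ <= X](bigID (mem Dset)) /=; apply: leq_trans (leq_addl _ _).
rewrite big_mkcond [X in _ <= X]big_mkcond; apply: leq_sum => a _.
rewrite in_setT /=; case: ifP => // aD.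
by apply: leq_sub2l; apply: lb; rewrite aD.
Qed.
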